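(* Let $(x_0,y_0)$ be a pair of integers satisfying $S_{2,1}$. Let $y_{-1}$ and $x_1$ be the real numbers defined by $y_{-1}y_0=x_0^3+x_0+1$ and $x_0x_1=y_0^3+y_0^2+1$. Then $y_{-1},x_1$ are integers, $(y_{-1},x_0)$ satisfies $S_{1,1}$, and $(y_0,x_1)$ satisfies $S_{2,2}$.
   Context: For $\lambda_a,\lambda_b\in\{1,2\}$, a pair of integers $(x,y)$ satisfies the system $S_{\lambda_a,\lambda_b}$ if $x\mid y^3+y^{\lambda_a}+1$ and $y\mid x^3+x^{\lambda_b}+1$. So $S_{1,1}$: $x\mid y^3+y+1,\ y\mid x^3+x+1$; $S_{2,1}$: $x\mid y^3+y^2+1,\ y\mid x^3+x+1$; $S_{2,2}$: $x\mid y^3+y^2+1,\ y\mid x^3+x^2+1$. *)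

(* Defs.v *)
From Stdlib Require Import ZArith Reals.

Definition S (la lb : Z) (x y : Z) : Prop :=
  (x | y ^ 3 + y ^ la + 1)%Z /\ (y | x ^ 3 + x ^ lb + 1)%Z.

(* Main.v *)
Require Import Defs.
From Stdlib Require Import ZArith Reals Lia Lra Znumtheory.
Open Scope Z_scope.

Lemma coprime_xy x y : (x | y^3 + y^2 + 1) -> Z.gcd x y = 1.
Proof.
  intros H.
  assert (Hg1 : (Z.gcd x y | x)) by apply Z.gcd_divide_l.
  assert (Hg2 : (Z.gcd x y | y)) by apply Z.gcd_divide_r.
  assert (Hg : (Z.gcd x y | y^3 + y^2 + 1)) by (apply (Z.divide_trans _ x); auto).
  assert (Hg3 : (Z.gcd x y | y * (y^2 + y))) by (apply Z.divide_mul_l; auto).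
  assert (Hg4 : (Z.gcd x y | 1)).
  { replace 1 with ((y^3+y^2+1) - y*(y^2+y)) by ring. apply Z.divide_sub_r; auto. }
  apply Z.divide_1_r_nonneg; auto. apply Z.gcd_nonneg.
Qed.

Theorem corollary3 (x0 y0 : Z) (ym1 x1 : R) :
  S 2 1 x0 y0 ->
  (ym1 * IZR y0 = IZR (x0 ^ 3 + x0 + 1))%R ->
  (IZR x0 * x1 = IZR (y0 ^ 3 + y0 ^ 2 + 1))%R ->
  exists a b : Z, ym1 = IZR a /\ x1 = IZR b /\ S 1 1 a x0 /\ S 2 2 y0 b.
Proof.
  intros [Hx Hy] E1 E2. unfold S in *. rewrite Z.pow_1_r in Hy.
  pose proof (coprime_xy _ _ Hx) as Hc.
  assert (Hc' : Z.gcd y0 x0 = 1) by (rewrite Z.gcd_comm; exact Hc).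
  destruct Hx as [b Hb]. destruct Hy as [a Ha].
  assert (Hy0 : y0 <> 0).
  { intro; subst. assert (x0 * (x0 * x0) + x0 + 1 = 0) by (replace (x0*(x0*x0)) with (x0^3) by ring; lia).
    destruct (Z.le_gt_cases x0 (-1)); destruct (Z.le_gt_cases x0 0); nia. }
  assert (Hx0 : x0 <> 0).
  { intro; subst. assert (y0 * (y0 * y0) + y0 * y0 + 1 = 0) by (replace (y0*(y0*y0)) with (y0^3) by ring; replace (y0*y0) with (y0^2) by ring; lia).
    destruct (Z.le_gt_cases y0 (-2)); [|assert (y0 = -1 \/ y0 >= 0) by lia]; nia. }
  exists a, b. split; [|split; [|split]].
  - rewrite Ha, mult_IZR in E1. apply eq_IZR_contrapositive in Hy0.
    apply (Rmult_eq_reg_r (IZR y0)); auto.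
  - rewrite Hb, mult_IZR in E2. apply eq_IZR_contrapositive in Hx0.
    apply (Rmult_eq_reg_l (IZR x0)); auto. rewrite E2; ring.
  - split.
    + exists y0. rewrite Z.pow_1_r. lia.
    + rewrite Z.pow_1_r. apply (Z.gauss _ (y0^3)).
      * exists (b + 3*(x0^2+1) + 3*x0*(x0^2+1)^2 + x0^2*(x0^2+1)^3 + (x0^2+1)*y0^2).
        assert (y0^3*(a^3+a+1) = (a*y0)^3 + (a*y0)*y0^2 + y0^3) by ring.
        rewrite H, <- Ha. replace (y0^3) with (b*x0 - y0^2 - 1) by lia. ring.
      * replace (y0^3) with (y0*(y0*y0)) by ring.
        apply Zgcd_1_rel_prime. apply Zgcd_1_rel_prime in Hc.
        repeat apply rel_prime_mult; auto.
  - split.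
    + apply (Z.gauss _ (x0^3)).
      * exists (a + 3*(y0^2+y0) + 3*y0*(y0^2+y0)^2 + y0^2*(y0^2+y0)^3 + 2*(y0^2+y0)*x0 + y0*(y0^2+y0)^2*x0).
        assert (x0^3*(b^3+b^2+1) = (b*x0)^3 + (b*x0)^2*x0 + x0^3) by ring.
        rewrite H, <- Hb. replace (x0^3) with (a*y0 - x0 - 1) by lia. ring.
      * replace (x0^3) with (x0*(x0*x0)) by ring.
        apply Zgcd_1_rel_prime. apply Zgcd_1_rel_prime in Hc'.
        repeat apply rel_prime_mult; auto.
    + exists x0. lia.
Qed.
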